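(* Let $u,v\in X_0^+(2r)$, $d:=\min\{d(u),d(v)\}$, $\hat u:=u+d\cdot e$, $\hat v:=v+d\cdot e$, where $e=(0,\dots,0,1,\dots,1)\in\mathbb Z^{2r}$ has zeros in the first $r$ and ones in the last $r$ components. Then $(u,v)$ satisfies (4.2) if and only if $d(\hat u)=0$ (for even $r$), respectively $d(\hat v)=0$ (for odd $r$), and $$\theta_i'(\hat v)\prec\theta_i(\hat u)\quad\text{for } i=1,2.$$
   Context: $X^+(N):=\{x\in\mathbb Z^N:x_1\ge\dots\ge x_N\}$, $X_0^+(N):=\{x\in X^+(N):x_i+x_{N+1-i}\text{ independent of } i\}$. For $y\in X_0^+(2r)$ the defect is $d(y):=y_r-y_{r+1}$, and $X_{sp}(2r):=\{y\in X_0^+(2r):d(y)=0\}$. A pair $(u,v)$ with $u,v\in X_0^+(2r)$ satisfies (4.2) if $u_{2\rho-1}\ge v_{2\rho-1}\ge v_{2\rho}\ge u_{2\rho}$ for $\rho=1,\dots,r$. For $\beta\in\mathbb Z^r$, $\alpha\in\mathbb Z^{r+1}$, write $\beta\prec\alpha$ if $\alpha_\rho\ge\beta_\rho\ge\alpha_{\rho+1}$ for $\rho=1,\dots,r$. Splitting maps: for even $r$, $y\in X_{sp}(2r)$, $z\in X_0^+(2r)$: $\theta_1(y):=(y_1,y_2,y_4,\dots,y_r,y_{r+3},y_{r+5},\dots,y_{2r-1},y_{2r})$, $\theta_2(y):=(y_1,y_3,\dots,y_{r-1},y_{r+1},y_{r+2},y_{r+4},\dots,y_{2r})$, $\theta_1'(z):=(z_2,z_4,\dots,z_r,z_{r+1},z_{r+3},\dots,z_{2r-1})$,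 $\theta_2'(z):=(z_1,z_3,\dots,z_{r-1},z_{r+2},z_{r+4},\dots,z_{2r})$. For odd $r$, $z\in X_0^+(2r)$, $y\in X_{sp}(2r)$: $\theta_1(z):=(z_1,z_2,z_4,\dots,z_{r-1},z_{r+2},z_{r+4},\dots,z_{2r-1},z_{2r})$, $\theta_2(z):=(z_1,z_3,\dots,z_r,z_{r+1},z_{r+3},\dots,z_{2r})$, $\theta_1'(y):=(y_2,y_4,\dots,y_{r+1},y_{r+2},y_{r+4},\dots,y_{2r-1})$, $\theta_2'(y):=(y_1,y_3,\dots,y_r,y_{r+3},y_{r+5},\dots,y_{2r})$. For $r=1$: $\theta_i(z)=z$, $\theta_i'(y)=y_1$. (So for even $r$, $\theta$ is applied only to weights of defect $0$; for odd $r$, $\theta'$ only to weights of defect $0$.) *)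

(* Defs.v *)
(* Weights are integer sequences; entries are 1-based:
   y_i := nth 0 y (i-1). *)
From HB Require Import structures.
From mathcomp Require Import all_boot all_order all_algebra.
Set Implicit Arguments. Unset Strict Implicit. Unset Printing Implicit Defensive.
Import Order.TTheory GRing.Theory Num.Theory.
Local Open Scope ring_scope.

Definition ent (y : seq int) (i : nat) : int := nth 0 y i.-1.

Definition inXplus (N : nat) (x : seq int) : Prop :=
  size x = N /\ forall i j : nat, (1 <= i)%N -> (i <= j)%N -> (j <= N)%N ->
    ent x j <= ent x i.

Definition inX0plus (N : nat) (x : seq int) : Prop :=
  inXplus N x /\ exists c : int, forall i : nat, (1 <= i <= N)%N ->
    ent x i + ent x (N.+1 - i) = c.

Definition defect (r : nat) (y : seq int) : int := ent y r - ent y r.+1.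

Definition evec (r : nat) : seq int := nseq r 0 ++ nseq r 1.

Definition shiftE (r : nat) (d : int) (y : seq int) : seq int :=
  [seq p.1 + d * p.2 | p <- zip y (evec r)].

Definition cond42 (r : nat) (u v : seq int) : Prop :=
  forall rho : nat, (1 <= rho <= r)%N ->
    [/\ ent v rho.*2.-1 <= ent u rho.*2.-1,
        ent v rho.*2 <= ent v rho.*2.-1 &
        ent u rho.*2 <= ent v rho.*2].

Definition prec (beta alpha : seq int) : Prop :=
  size alpha = (size beta).+1 /\
  forall rho : nat, (1 <= rho <= size beta)%N ->
    ent alpha rho.+1 <= ent beta rho /\ ent beta rho <= ent alpha rho.

Definition step2 (a n : nat) : seq nat := mkseq (fun k => (a + 2 * k)%N) n.

Definition theta1_idx (r : nat) : seq nat :=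
  let m := r./2 in
  if ~~ odd r then
    [:: 1%N] ++ step2 2 m ++ step2 (r + 3) m.-1 ++ [:: (2 * r)%N]
  else
    [:: 1%N] ++ step2 2 m ++ step2 (r + 2) m ++ [:: (2 * r)%N].

Definition theta2_idx (r : nat) : seq nat :=
  let m := r./2 in
  if ~~ odd r then
    step2 1 m ++ [:: r.+1] ++ step2 (r + 2) m
  else
    step2 1 m.+1 ++ step2 (r + 1) m.+1.

Definition theta1'_idx (r : nat) : seq nat :=
  let m := r./2 in
  if ~~ odd r then
    step2 2 m ++ step2 (r + 1) m
  else if r == 1%N then [:: 1%N]
  else step2 2 m.+1 ++ step2 (r + 2) m.

Definition theta2'_idx (r : nat) : seq nat :=
  let m := r./2 in
  if ~~ odd r then
    step2 1 m ++ step2 (r + 2) m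
  else
    step2 1 m.+1 ++ step2 (r + 3) m.

Definition theta1 (r : nat) (y : seq int) : seq int := map (ent y) (theta1_idx r).
Definition theta2 (r : nat) (y : seq int) : seq int := map (ent y) (theta2_idx r).
Definition theta1' (r : nat) (y : seq int) : seq int := map (ent y) (theta1'_idx r).
Definition theta2' (r : nat) (y : seq int) : seq int := map (ent y) (theta2'_idx r).

(* Main.v *)
Require Import Defs.
From HB Require Import structures.
From mathcomp Require Import all_boot all_order all_algebra zify.
Import Order.TTheory GRing.Theory Num.Theory.
Lemma size_step2 a n : size (step2 a n) = n.
Proof. by rewrite size_mkseq. Qed.
Lemma nth_step2 a n k : (k < n)%N -> nth 0%N (step2 a n) k = (a + 2 * k)%N.
Proof. by move=> h; rewrite nth_mkseq. Qed.

Opaque step2.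

Lemma nth1 (a n : nat) : (n <= 0)%N -> nth 0%N [:: a] n = a.
Proof. by case: n. Qed.

Lemma nthC (a : nat) s n : nth 0%N (a :: s) n = if n == 0%N then a else nth 0%N s n.-1.
Proof. by case: n. Qed.

Ltac step := match goal with |- context [if ?c then _ else _] => case: (boolP c) => ? end; try lia.
Ltac solve_idx := repeat step; rewrite ?nth_cat ?size_step2 ?size_cat /=;
  repeat (step; rewrite ?nth_cat ?size_step2 /=);
  rewrite ?nth_step2; try lia; try (rewrite nth1; lia).
Ltac solve_idxC := repeat step; rewrite ?nth_cat ?size_step2 ?size_cat /=;
  repeat (step; rewrite ?nth_cat ?size_step2 ?nthC ?nth_nil /=);
  rewrite ?nth_step2; try lia; try (rewrite nth1; lia).

Lemma t1e m k : (0 < m)%N -> (k <= m.*2)%N -> nth 0%N (theta1_idx m.*2) k =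
  if k == 0%N then 1%N else if (k <= m)%N then k.*2 else if (k < m.*2)%N then k.*2.+1 else (m.*2).*2.
Proof.
move=> hm hk; rewrite /theta1_idx odd_double doubleK /=.
case: k hk => [|k] hk //=; solve_idx.
Qed.

Lemma t2e m k : (0 < m)%N -> (k <= m.*2)%N -> nth 0%N (theta2_idx m.*2) k =
  if (k <= m)%N then k.*2.+1 else k.*2.
Proof. move=> hm hk; rewrite /theta2_idx odd_double doubleK /=; solve_idxC. Qed.

Lemma t1'e m k : (0 < m)%N -> (k < m.*2)%N -> nth 0%N (theta1'_idx m.*2) k =
  if (k < m)%N then k.*2.+2 else k.*2.+1.
Proof. move=> hm hk; rewrite /theta1'_idx odd_double doubleK /=; solve_idx. Qed.

Lemma t2'e m k : (0 < m)%N -> (k < m.*2)%N -> nth 0%N (theta2'_idx m.*2) k =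
  if (k < m)%N then k.*2.+1 else k.*2.+2.
Proof. move=> hm hk; rewrite /theta2'_idx odd_double doubleK /=; solve_idx. Qed.

Lemma hh m : (m.*2.+1)./2 = m.
Proof. by rewrite /= uphalf_double. Qed.

Lemma t1o m k : (k <= m.*2.+1)%N -> nth 0%N (theta1_idx m.*2.+1) k =
  if k == 0%N then 1%N else if (k <= m)%N then k.*2 else if (k < m.*2.+1)%N then k.*2.+1 else (m.*2.+1).*2.
Proof.
move=> hk; rewrite /theta1_idx ifF ?hh ?oddS ?odd_double //.
case: k hk => [|k] hk //=; solve_idx.
Qed.

Lemma t2o m k : (k <= m.*2.+1)%N -> nth 0%N (theta2_idx m.*2.+1) k =
  if (k <= m)%N then k.*2.+1 else k.*2.
Proof. move=> hk; rewrite /theta2_idx ifF ?hh ?oddS ?odd_double //; solve_idx. Qed.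

Lemma t1'o m k : (0 < m)%N -> (k < m.*2.+1)%N -> nth 0%N (theta1'_idx m.*2.+1) k =
  if (k <= m)%N then k.*2.+2 else k.*2.+1.
Proof.
move=> hm hk; rewrite /theta1'_idx ifF ?hh ?oddS ?odd_double //.
have -> : (m.*2.+1 == 1)%N = false by lia.
solve_idx.
Qed.

Lemma t2'o m k : (k < m.*2.+1)%N -> nth 0%N (theta2'_idx m.*2.+1) k =
  if (k <= m)%N then k.*2.+1 else k.*2.+2.
Proof. move=> hk; rewrite /theta2'_idx ifF ?hh ?oddS ?odd_double //; solve_idx. Qed.

Lemma par r : exists m, r = m.*2 \/ r = m.*2.+1.
Proof. exists r./2; case: (boolP (odd r)) => h; [right|left]; rewrite -{1}[r]odd_double_half ?h ?(negbTE h) //=. Qed.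

Lemma sz r : (0 < r)%N ->
  [/\ size (theta1_idx r) = r.+1, size (theta2_idx r) = r.+1,
      size (theta1'_idx r) = r & size (theta2'_idx r) = r].
Proof.
move=> hr; case: (par r) => m [] E; subst r.
  rewrite /theta1_idx /theta2_idx /theta1'_idx /theta2'_idx odd_double doubleK /=.
  rewrite !size_cat /= !size_step2; split; lia.
have eo : ~~ odd m.*2.+1 = false by rewrite oddS odd_double.
rewrite /theta1_idx /theta2_idx /theta1'_idx /theta2'_idx !(ifF _ _ eo) hh.
rewrite !size_cat /= !size_step2.
case: ifP => [/eqP E|_]; rewrite ?size_cat /= ?size_step2 /=; split; lia.
Qed.

Local Open Scope ring_scope.

Lemma ent_shift r d y i : size y = (2*r)%N -> (1 <= i <= 2*r)%N ->
  ent (shiftE r d y) i = ent y i + (if (r < i)%N then d else 0).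
Proof.
move=> hs hi; rewrite /ent /shiftE (nth_map (0,0)); last first.
  by rewrite size_zip size_cat !size_nseq hs; lia.
rewrite nth_zip; last by rewrite size_cat !size_nseq hs; lia.
rewrite /= /evec nth_cat size_nseq.
case: (ltnP i.-1 r) => h; rewrite nth_nseq.
  have -> : (r < i)%N = false by lia.
  by rewrite h mulr0.
have -> : (r < i)%N = true by lia.
have -> : (i.-1 - r < r)%N = true by lia.
by rewrite mulr1.
Qed.

Lemma size_shift r d y : size y = (2*r)%N -> size (shiftE r d y) = (2*r)%N.
Proof. by move=> hs; rewrite size_map size_zip size_cat !size_nseq hs; lia. Qed.


Definition mono (r : nat) (U : nat -> int) := forall i j : nat,
  (1 <= i)%N -> (i <= j)%N -> (j <= 2 * r)%N -> U j <= U i.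
Definition CC (r : nat) (U V : nat -> int) := forall k : nat, (k < r)%N ->
  V k.*2.+1 <= U k.*2.+1 /\ U k.*2.+2 <= V k.*2.+2.
Definition PP (r : nat) (a b : seq nat) (U V : nat -> int) := forall k : nat, (k < r)%N ->
  U (nth 0%N a k.+1) <= V (nth 0%N b k) /\ V (nth 0%N b k) <= U (nth 0%N a k).

Section Core.
Variables (r : nat) (U V : nat -> int).
Hypotheses (hr : (0 < r)%N) (mU : mono r U) (mV : mono r V).

Section Fwd.
Hypothesis hC : CC r U V.
Lemma F1 k a : (k < r)%N -> (1 <= a)%N -> (a <= k.*2.+1)%N -> V k.*2.+1 <= U a.
Proof.
move=> hk h1 h2; have [h _] := hC k hk; apply: le_trans h _; apply: mU; lia.
Qed.
Lemma F2 k a : (k < r)%N -> (1 <= a)%N -> (a <= k.*2.+1)%N -> V k.*2.+2 <= U a.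
Proof.
move=> hk h1 h2; apply: le_trans (F1 k a hk h1 h2); apply: mV; lia.
Qed.
Lemma F3 k a : (k < r)%N -> (k.*2.+2 <= a)%N -> (a <= 2 * r)%N -> U a <= V k.*2.+2.
Proof.
move=> hk h1 h2; have [_ h] := hC k hk; apply: le_trans h; apply: mU; lia.
Qed.
Lemma F4 k a : (k < r)%N -> (k.*2.+2 <= a)%N -> (a <= 2 * r)%N -> U a <= V k.*2.+1.
Proof.
move=> hk h1 h2; apply: le_trans (F3 k a hk h1 h2) _; apply: mV; lia.
Qed.

Lemma G1 b a : (b <= 2 * r)%N -> odd b -> (1 <= a)%N -> (a <= b)%N -> V b <= U a.
Proof. move=> h1 h2 h3 h4; have E : b = (b./2).*2.+1 by lia. rewrite E; apply: F1; lia. Qed.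
Lemma G2 b a : (b <= 2 * r)%N -> ~~ odd b -> (1 <= a)%N -> (a < b)%N -> V b <= U a.
Proof. move=> h1 h2 h3 h4; have E : b = (b./2).-1.*2.+2 by lia. rewrite E; apply: F2; lia. Qed.
Lemma G3 b a : (1 <= b)%N -> ~~ odd b -> (b <= a)%N -> (a <= 2 * r)%N -> U a <= V b.
Proof. move=> h1 h2 h3 h4; have E : b = (b./2).-1.*2.+2 by lia. rewrite E; apply: F3; lia. Qed.
Lemma G4 b a : odd b -> (b < a)%N -> (a <= 2 * r)%N -> U a <= V b.
Proof. move=> h2 h3 h4; have E : b = (b./2).*2.+1 by lia. rewrite E; apply: F4; lia. Qed.
End Fwd.
End Core.

Ltac fw := match goal with H : CC ?r _ _ |- _ => split; [first [ (eapply (@G3 r); try eassumption; lia) | (eapply (@G4 r); try eassumption; lia)] | first [ (eapply (@G1 r); try eassumption; lia) | (eapply (@G2 r); try eassumption; lia)]] end.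

Lemma fwd r U V : (0 < r)%N -> mono r U -> mono r V -> CC r U V -> PP r (theta1_idx r) (theta1'_idx r) U V /\ PP r (theta2_idx r) (theta2'_idx r) U V.
Proof.
move=> hr mU mV hC.
case: (par r) => m [] E; subst r.
  have hm : (0 < m)%N by lia.
  split=> k hk.
    rewrite !t1e ?t1'e //; try lia. repeat step; fw.
  rewrite !t2e ?t2'e //; try lia. repeat step; fw.
have [E|hm] := posnP m; first subst m.
  split=> k hk; have -> : k = 0%N by lia.
    rewrite [theta1'_idx _]/= !t1o //=; fw.
  rewrite !t2o ?t2'o //=; fw.
split=> k hk.
  rewrite !t1o ?t1'o //; try lia. repeat step; fw.
rewrite !t2o ?t2'o //; try lia. repeat step; fw.
Qed.

Ltac fin := try lia; repeat step; rewrite ?doubleS; lia.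

Lemma bwd_even m U V : (0 < m)%N -> U m.*2 = U m.*2.+1 ->
  PP m.*2 (theta1_idx m.*2) (theta1'_idx m.*2) U V ->
  PP m.*2 (theta2_idx m.*2) (theta2'_idx m.*2) U V -> CC m.*2 U V.
Proof.
move=> hm hU P1 P2 k hk.
case: (ltngtP k m) => hkm; [| |subst k].
- split.
    have := P2 k hk; rewrite !t2e ?t2'e //; fin.
  have := P1 k hk; rewrite !t1e ?t1'e //; fin.
- split.
    have := P1 k hk; rewrite !t1e ?t1'e //; fin.
  have := P2 k hk; rewrite !t2e ?t2'e //; fin.
- split.
    have := P1 m hk; rewrite !t1e ?t1'e //; fin.
  have := P2 m hk; rewrite !t2e ?t2'e //; fin.
Qed.

Lemma bwd_odd m U V : V m.*2.+1 = V m.*2.+2 ->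
  PP m.*2.+1 (theta1_idx m.*2.+1) (theta1'_idx m.*2.+1) U V ->
  PP m.*2.+1 (theta2_idx m.*2.+1) (theta2'_idx m.*2.+1) U V -> CC m.*2.+1 U V.
Proof.
move=> hV P1 P2 k hk.
case: (ltngtP k m) => hkm; [| |subst k].
- have hm : (0 < m)%N by lia.
  split.
    have := P2 k hk; rewrite !t2o ?t2'o //; fin.
  have := P1 k hk; rewrite !t1o ?t1'o //; fin.
- split.
    have := P1 k hk; rewrite !t1o ?t1'o //; fin.
  have := P2 k hk; rewrite !t2o ?t2'o //; fin.
- split.
    have := P2 m hk; rewrite !t2o ?t2'o //; fin.
  have := P2 m hk; rewrite !t2o ?t2'o //; fin.
Qed.

Lemma prec_PP r (y z : seq int) (a b : seq nat) : size a = r.+1 -> size b = r ->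
  prec (map (ent z) b) (map (ent y) a) <-> PP r a b (ent y) (ent z).
Proof.
move=> ha hb; split.
  case=> _ H k hk; have := H k.+1; rewrite size_map hb /ent /= !(nth_map 0%N) ?ha ?hb; try lia.
move=> H; split; first by rewrite !size_map ha hb.
move=> rho; rewrite size_map hb => hrho.
have := H rho.-1; rewrite /ent /= !(nth_map 0%N) ?ha ?hb; try lia.
have -> : rho.-1.+1 = rho by lia.
by move=> /(_ ltac:(lia)) [].
Qed.

Lemma cond_CC r (u v : seq int) : mono r (ent v) ->
  cond42 r u v <-> CC r (ent u) (ent v).
Proof.
move=> mV; split.
  move=> H k hk; have [h1 _ h3] := H k.+1 ltac:(lia).
  by move: h1 h3; rewrite doubleS /=.
move=> H rho hrho; have [h1 h2] := H rho.-1 ltac:(lia).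
have E1 : rho.-1.*2.+1 = rho.*2.-1 by lia.
have E2 : rho.-1.*2.+2 = rho.*2 by lia.
rewrite E1 in h1; rewrite E2 in h2; split => //; apply: mV; lia.
Qed.

Lemma CC_shift r d (u v : seq int) : size u = (2 * r)%N -> size v = (2 * r)%N ->
  CC r (ent u) (ent v) <-> CC r (ent (shiftE r d u)) (ent (shiftE r d v)).
Proof.
move=> su sv; rewrite /CC; split=> H k hk; have := H k hk;
  rewrite !ent_shift //; try lia; case: ifP => _; case: ifP => _; lia.
Qed.

Lemma mono_shift r d (y : seq int) : (1 <= r)%N -> inXplus (2 * r) y -> d <= defect r y ->
  mono r (ent (shiftE r d y)).
Proof.
move=> hr [sy my] hd i j hi hij hj.
rewrite !ent_shift //; try lia.
have h1 := my i j hi hij hj.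
move: hd; rewrite /defect => hd.
case: ifP => a; case: ifP => b; try lia.
have h2 := my i r hi ltac:(lia) ltac:(lia).
have h3 := my r.+1 j ltac:(lia) ltac:(lia) hj.
lia.
Qed.

Lemma defect_shift r d (y : seq int) : (1 <= r)%N -> size y = (2 * r)%N ->
  defect r (shiftE r d y) = defect r y - d.
Proof.
move=> hr sy; rewrite /defect !ent_shift //; try lia.
rewrite ltnn ltnSn; lia.
Qed.

Theorem corollary4p2 (r : nat) (hr : (1 <= r)%N) (u v : seq int) :
  inX0plus (2 * r) u -> inX0plus (2 * r) v ->
  let d := Num.min (defect r u) (defect r v) in
  let uh := shiftE r d u in
  let vh := shiftE r d v in
  cond42 r u v <->
  [/\ (if odd r then defect r vh = 0 else defect r uh = 0),
      prec (theta1' r vh) (theta1 r uh) &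
      prec (theta2' r vh) (theta2 r uh)].
Proof.
move=> hu hv d uh vh.
have [[su mu] _] := hu; have [[sv mv] _] := hv.
have hdu : d <= defect r u by rewrite /d ge_min lexx.
have hdv : d <= defect r v by rewrite /d ge_min lexx orbT.
have mUh : mono r (ent uh) := mono_shift r d u hr hu.1 hdu.
have mVh : mono r (ent vh) := mono_shift r d v hr hv.1 hdv.
have eu : defect r uh = defect r u - d by rewrite /uh defect_shift.
have ev : defect r vh = defect r v - d by rewrite /vh defect_shift.
have hz : defect r uh = 0 \/ defect r vh = 0.
  rewrite eu ev /d /Num.Def.minr; case: ifP => _; rewrite subrr; [left|right]; done.
have [s1 s2 s1' s2'] := sz r hr.
have P1 := prec_PP r uh vh (theta1_idx r) (theta1'_idx r) s1 s1'.
have P2 := prec_PP r uh vh (theta2_idx r) (theta2'_idx r) s2 s2'.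
apply: (iff_trans (cond_CC r u v mv)).
apply: (iff_trans (CC_shift r d u v su sv)).
rewrite -/uh -/vh.
split.
  move=> hC; have [F1 F2] := fwd r _ _ hr mUh mVh hC.
  split; [| by apply/P1 | by apply/P2].
  move: eu ev hz hdu hdv; rewrite /defect => eu ev hz hdu hdv.
  case: (par r) => m [] E.
    have -> : odd r = false by rewrite E odd_double.
    have [_ a1] := hC m.-1 ltac:(lia).
    have [b1 _] := hC m ltac:(lia).
    have e1 : m.-1.*2.+2 = r by lia.
    have e2 : m.*2.+1 = r.+1 by lia.
    rewrite e1 in a1; rewrite e2 in b1; lia.
  have -> : odd r = true by rewrite E oddS odd_double.
  have [b1 a1] := hC m ltac:(lia).
  have e1 : m.*2.+2 = r.+1 by lia.
  have e2 : m.*2.+1 = r by lia.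
  rewrite e1 in a1; rewrite e2 in b1; lia.
case=> hD /P1 H1 /P2 H2.
case: (par r) => m [] E.
  have ho : odd r = false by rewrite E odd_double.
  rewrite ho /defect in hD.
  rewrite E in H1 H2 hD *.
  apply: bwd_even => //; lia.
have ho : odd r = true by rewrite E oddS odd_double.
rewrite ho /defect in hD.
rewrite E in H1 H2 hD *.
apply: bwd_odd => //; lia.
Qed.
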